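(* Let $G$ be a finite graph with edges labeled $1,\dots,n$, let $\sigma$ be a permutation of $\{1,\dots,n\}$, and let $G_\sigma$ be the same graph with the edge labeled $k$ in $G$ relabeled $\sigma(k)$. Then the chain complexes $\mathcal{C}(G)$ and $\mathcal{C}(G_\sigma)$ are isomorphic (by degree-preserving isomorphisms commuting with the differentials); consequently the cohomology groups $H^i(G)$ are independent of the ordering of the edges and are invariants of the graph.
   Context: Graphs are finite; loops and multiple edges allowed. For $G=(V,E)$ and $s\subseteq E$, $[G:s]$ is the spanning subgraph with edge set $s$. With $1*1=1$, $1*x=x*1=x$, $x*x=0$: an enhanced state is $S=(s,c)$, $s\subseteq E$, $c$ assigning $1$ or $x$ to each component of $[G:s]$; $i(S)=|s|$, $j(S)=$ number of components colored $x$. $C^{i,j}(G)$ is free abelian on enhanced states with $i(S)=i,j(S)=j$; $C^i(G)=\bigoplus_jC^{i,j}(G)$, graded by $j$. For an ordering of the edges, $d(S)=\sum_{e\in E\setminus s}(-1)^{n(e)}S_e$, $n(e)$ the number of edges of $s$ ordered before $e$; $S_e=(s\cup\{e\},c_e)$ where, if $e$ joins a component to itself, colors are unchanged, and if $e$ joins distinct components $E_1,E_2$ the merged component gets $c(E_1)*c(E_2)$ (and $S_e=0$ if this product is $0$). $\mathcal{C}(G)=(C^\bullet(G),d)$, and $H^i(G)$ is its $i$-th cohomology, graded by $j$. *)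

(* Defs.v *)
From HB Require Import structures.
From mathcomp Require Import all_boot all_order all_algebra all_fingroup.
Set Implicit Arguments. Unset Strict Implicit. Unset Printing Implicit Defensive.
Import GRing.Theory.
Local Open Scope ring_scope.

(* A finite graph (loops and multiple edges allowed) with vertex type V and
   edges labelled by 'I_n; the edge with label k has endpoints [ends k].
   The ordering of the edges is the ordering of the labels. *)
Section ChromaticComplex.
Variables (V : finType) (n : nat) (ends : 'I_n -> V * V).

Definition sadj (s : {set 'I_n}) : rel V :=
  fun u v => [exists e in s, (ends e == (u, v)) || (ends e == (v, u))].

Definition sconn (s : {set 'I_n}) (u v : V) : bool := connect (sadj s) u v.

(* a colouring c : V -> bool (true = x, false = 1) constant on the
   components of [G:s] is the same thing as a colouring of the components *)
Definition valid_state (p : {set 'I_n} * {ffun V -> bool}) : bool :=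
  [forall u, forall v, sconn p.1 u v ==> (p.2 u == p.2 v)].

Definition State := {p : {set 'I_n} * {ffun V -> bool} | valid_state p}.

Definition st_s (S : State) : {set 'I_n} := (val S).1.
Definition st_c (S : State) : {ffun V -> bool} := (val S).2.

Definition ideg (S : State) : nat := #|st_s S|.
Definition jdeg (S : State) : nat :=
  #|[set [set v | sconn (st_s S) u v] | u in [set u | st_c S u]]|.

Definition nbefore (s : {set 'I_n}) (e : 'I_n) : nat :=
  #|[set e' in s | (e' < e)%N]|.

(* colouring of S_e when it is nonzero: the component containing e gets
   c(E1)*c(E2) (= c(E1) if e joins a component to itself) *)
Definition newcol (s : {set 'I_n}) (c : {ffun V -> bool}) (e : 'I_n)
  : {ffun V -> bool} :=
  [ffun v => if sconn (s :|: [set e]) (ends e).1 v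
             then c (ends e).1 || c (ends e).2 else c v].

Definition Se_zero (s : {set 'I_n}) (c : {ffun V -> bool}) (e : 'I_n) : bool :=
  [&& ~~ sconn s (ends e).1 (ends e).2, c (ends e).1 & c (ends e).2].

Definition dcoef (S T : State) : int :=
  \sum_(e : 'I_n | [&& e \notin st_s S,
                      st_s T == st_s S :|: [set e],
                      st_c T == newcol (st_s S) (st_c S) e
                    & ~~ Se_zero (st_s S) (st_c S) e])
     (-1) ^+ nbefore (st_s S) e.

(* the cochain group C(G) = free abelian group on the (finitely many)
   enhanced states; an element is its coefficient function *)
Definition Cochain := {ffun State -> int}.

Definition dmap (x : Cochain) : Cochain :=
  [ffun T => \sum_(S : State) x S * dcoef S T].

Definition inCij (i j : nat) (x : Cochain) : Prop :=
  forall S : State, x S != 0 -> ideg S = i /\ jdeg S = j.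

End ChromaticComplex.

(* G_sigma: the edge labelled k in G gets label sigma k *)
Definition relabel (V : finType) (n : nat) (ends : 'I_n -> V * V)
  (sigma : {perm 'I_n}) : 'I_n -> V * V :=
  fun k => ends ((sigma^-1)%g k).

Definition complex_iso (V : finType) (n : nat) (e1 e2 : 'I_n -> V * V) : Prop :=
  exists f : Cochain e1 -> Cochain e2,
    [/\ forall x y, f (x + y) = f x + f y,
        bijective f,
        forall i j x, inCij i j x -> inCij i j (f x)
      & forall x, f (dmap x) = dmap (f x)].

(* Main.v *)
Require Import Defs.
From mathcomp Require Import all_boot all_order all_algebra all_fingroup.
Set Implicit Arguments. Unset Strict Implicit. Unset Printing Implicit Defensive.
Import GRing.Theory.
Local Open Scope ring_scope.

Lemma sadj_im (V : finType) n (E1 E2 : 'I_n -> V * V) (h : 'I_n -> 'I_n)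
  (s : {set 'I_n}) :
  (forall k, E1 (h k) = E2 k) -> sadj E1 (h @: s) =2 sadj E2 s.
Proof.
move=> hE u v; rewrite /sadj; apply/existsP/existsP.
- case=> e /andP[/imsetP[e' e's ->]]; rewrite hE => H; exists e'; by rewrite e's.
- case=> e' /andP[e's H]; exists (h e'); by rewrite imset_f //= hE.
Qed.

Lemma sconn_im (V : finType) n (E1 E2 : 'I_n -> V * V) (h : 'I_n -> 'I_n)
  (s : {set 'I_n}) :
  (forall k, E1 (h k) = E2 k) -> sconn E1 (h @: s) =2 sconn E2 s.
Proof. move=> hE u v; exact: (eq_connect (sadj_im s hE)). Qed.

Section Pf.
Variables (V : finType) (n : nat) (ends : 'I_n -> V * V) (sg : {perm 'I_n}).
Local Notation ends' := (relabel ends sg).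

Lemma hE1 k : ends' (sg k) = ends k. Proof. by rewrite /relabel permK. Qed.
Lemma hE2 k : ends ((sg^-1)%g k) = ends' k. Proof. by []. Qed.

Lemma valid_phi (S : State ends) : valid_state ends' (sg @: st_s S, st_c S).
Proof.
apply/forallP=> u; apply/forallP=> v; rewrite /= (sconn_im _ hE1).
by have /forallP/(_ u)/forallP/(_ v) := valP S.
Qed.

Lemma valid_psi (S : State ends') : valid_state ends ((sg^-1)%g @: st_s S, st_c S).
Proof.
apply/forallP=> u; apply/forallP=> v; rewrite /= (sconn_im _ hE2).
by have /forallP/(_ u)/forallP/(_ v) := valP S.
Qed.

Definition phi (S : State ends) : State ends' := exist (fun p => valid_state ends' p) _ (valid_phi S).
Definition psi (S : State ends') : State ends := exist (fun p => valid_state ends p) _ (valid_psi S).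

Lemma st_s_phi S : st_s (phi S) = sg @: st_s S. Proof. by []. Qed.
Lemma st_c_phi S : st_c (phi S) = st_c S. Proof. by []. Qed.
Lemma st_s_psi S : st_s (psi S) = (sg^-1)%g @: st_s S. Proof. by []. Qed.
Lemma st_c_psi S : st_c (psi S) = st_c S. Proof. by []. Qed.

Lemma imK1 (s : {set 'I_n}) : (sg^-1)%g @: (sg @: s) = s.
Proof.
apply/setP=> x; apply/imsetP/idP.
- by case=> y /imsetP[z zs ->] ->; rewrite permK.
- by move=> xs; exists (sg x); [exact: imset_f | rewrite permK].
Qed.

Lemma imK2 (s : {set 'I_n}) : sg @: ((sg^-1)%g @: s) = s.
Proof.
apply/setP=> x; apply/imsetP/idP.
- by case=> y /imsetP[z zs ->] ->; rewrite permKV.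
- by move=> xs; exists ((sg^-1)%g x); [exact: imset_f | rewrite permKV].
Qed.

Lemma phiK : cancel phi psi.
Proof.
case=> [[s c] vS]; apply: val_inj; rewrite /= /st_s /=.
by rewrite imK1.
Qed.

Lemma psiK : cancel psi phi.
Proof.
case=> [[s c] vS]; apply: val_inj; rewrite /= /st_s /=.
by rewrite imK2.
Qed.

Definition gsg (a b : 'I_n) : int :=
  if (a < b)%N && (sg b < sg a)%N then -1 else 1.
Definition eps (s : {set 'I_n}) : int := \prod_(a in s) \prod_(b in s) gsg a b.

Lemma gsg_sq a b : gsg a b * gsg a b = 1.
Proof. by rewrite /gsg; case: ifP. Qed.

Lemma eps_sq (s : {set 'I_n}) : eps s * eps s = 1.
Proof.
rewrite /eps -big_split /=; apply: big1 => a _.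
rewrite -big_split /=; apply: big1 => b _; exact: gsg_sq.
Qed.

Lemma eps_add (s : {set 'I_n}) (e : 'I_n) : e \notin s ->
  eps (e |: s) = eps s * \prod_(a in s) (gsg e a * gsg a e).
Proof.
move=> es; rewrite /eps big_setU1 //= big_setU1 //=. 
rewrite [X in _ * X](eq_bigr (fun a => gsg a e * \prod_(b in s) gsg a b));
  last by move=> a _; rewrite big_setU1.
rewrite big_split /= big_split /=.
have -> : gsg e e = 1 by rewrite /gsg ltnn.
rewrite mul1r.
set A := \prod_(i in s) gsg e i. set B := \prod_(i in s) gsg i e.
set C := \prod_(i in s) _.
by rewrite mulrA [A * B]mulrC [B * A * C]mulrC.
Qed.

Lemma signcard (s : {set 'I_n}) (P : pred 'I_n) :
  (-1) ^+ #|[set a in s | P a]| = \prod_(a in s) (if P a then -1 else 1) :> int.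
Proof.
rewrite -prodr_const big_mkcond [RHS]big_mkcond; apply: eq_bigr => a _.
by rewrite !inE; case: (a \in s); case: (P a).
Qed.

Lemma pointwise a e : a != e ->
  (if (sg a < sg e)%N then -1 else 1) =
  gsg e a * gsg a e * (if (a < e)%N then -1 else 1) :> int.
Proof.
move=> ne; have ne' : sg a != sg e by rewrite (inj_eq perm_inj).
rewrite /gsg.
case: (ltngtP a e) => [lt|gt|eq]; last by case/eqP: ne; apply: val_inj.
all: case: (ltngtP (sg a) (sg e)) => [lt'|gt'|eq'] //.
all: by case/eqP: ne'; apply: val_inj.
Qed.

Lemma key (s : {set 'I_n}) (e : 'I_n) : e \notin s ->
  eps s * (-1) ^+ nbefore (sg @: s) (sg e) = eps (s :|: [set e]) * (-1) ^+ nbefore s e.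
Proof.
move=> es; rewrite setUC eps_add // /nbefore !signcard.
rewrite big_imset /=; last by move=> x y _ _; exact: perm_inj.
rewrite -mulrA -[X in _ = _ * X]big_split /=; congr (_ * _); apply: eq_bigr => a as_.
apply: pointwise; apply: contraNneq es => <-; exact: as_.
Qed.

Lemma newcol_phi (s : {set 'I_n}) (c : {ffun V -> bool}) (e : 'I_n) :
  newcol ends' (sg @: s) c (sg e) = newcol ends s c e.
Proof.
apply/ffunP=> v; rewrite !ffunE hE1 -imset_set1 -imsetU (sconn_im _ hE1).
by [].
Qed.

Lemma Se_zero_phi (s : {set 'I_n}) (c : {ffun V -> bool}) (e : 'I_n) :
  Se_zero ends' (sg @: s) c (sg e) = Se_zero ends s c e.
Proof. by rewrite /Se_zero hE1 (sconn_im _ hE1). Qed.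

Lemma dcoef_phi S T :
  eps (st_s S) * @dcoef _ _ ends' (phi S) (phi T) = eps (st_s T) * @dcoef _ _ ends S T.
Proof.
rewrite /dcoef (reindex_inj (@perm_inj _ sg)) /= !mulr_sumr.
apply: eq_big => [e|e]; rewrite !st_s_phi !st_c_phi mem_imset ?newcol_phi
   ?Se_zero_phi -?imset_set1 -?imsetU ?(inj_eq (imset_inj (@perm_inj _ sg))) //;
   try exact: perm_inj.
move=> /and4P[es /eqP tE _ _]; rewrite tE key //.
Qed.

Definition fmap (x : Cochain ends) : Cochain ends' :=
  [ffun T => eps (st_s (psi T)) * x (psi T)].
Definition gmap (y : Cochain ends') : Cochain ends :=
  [ffun S => eps (st_s S) * y (phi S)].

Lemma jdeg_psi T : jdeg (psi T) = jdeg T.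
Proof.
rewrite /jdeg st_s_psi st_c_psi.
have E : (fun u => [set v | sconn ends ((sg^-1)%g @: st_s T) u v]) =1
         (fun u => [set v | sconn ends' (st_s T) u v]).
  by move=> u; apply/setP=> v; rewrite !inE (sconn_im _ hE2).
by rewrite (eq_imset _ E).
Qed.

Lemma ideg_psi T : ideg (psi T) = ideg T.
Proof. by rewrite /ideg st_s_psi card_imset //; exact: perm_inj. Qed.

Lemma fmapE x T : fmap x T = eps (st_s (psi T)) * x (psi T).
Proof. exact: ffunE. Qed.
Lemma gmapE y S : gmap y S = eps (st_s S) * y (phi S).
Proof. exact: ffunE. Qed.
Lemma addE (x y : Cochain ends) S : (x + y) S = x S + y S.
Proof. exact: ffunE. Qed.
Lemma addE' (x y : Cochain ends') S : (x + y) S = x S + y S.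
Proof. exact: ffunE. Qed.
Lemma dmapE (x : Cochain ends) T : dmap x T = \sum_(S : State ends) x S * dcoef S T.
Proof. exact: ffunE. Qed.
Lemma dmapE' (x : Cochain ends') T : dmap x T = \sum_(S : State ends') x S * dcoef S T.
Proof. exact: ffunE. Qed.
Opaque fmap gmap dmap.

Lemma iso : complex_iso ends ends'.
Proof.
exists fmap; split.
- move=> x y; apply/ffunP=> T.
  by rewrite [RHS]addE' [LHS]fmapE [X in _ = X + _]fmapE [X in _ = _ + X]fmapE
    [X in _ * X]addE mulrDr.
- exists gmap.
  + move=> x; apply/ffunP=> S.
    by rewrite [LHS]gmapE [X in _ * X]fmapE phiK mulrA eps_sq mul1r.
  + move=> y; apply/ffunP=> T.
    by rewrite [LHS]fmapE [X in _ * X]gmapE psiK mulrA eps_sq mul1r.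
- move=> i j x Hx T; rewrite [fmap x T]fmapE => H.
  have : x (psi T) != 0 by apply: contraNneq H => ->; rewrite mulr0.
  by case/Hx; rewrite ideg_psi jdeg_psi.
- move=> x; apply/ffunP=> T; rewrite -(psiK T); move: (psi T) => T0.
  rewrite [LHS]fmapE [RHS]dmapE' phiK [X in _ * X]dmapE mulr_sumr.
  rewrite [RHS](reindex phi) /=; last first.
    by apply: onW_bij; exists psi; [exact: phiK | exact: psiK].
  apply: eq_bigr => S _.
  rewrite [fmap x (phi S)]fmapE phiK -mulrA [RHS]mulrCA dcoef_phi [RHS]mulrCA.
  by [].
Qed.

End Pf.

Theorem mainTheorem3 (V : finType) (n : nat) (ends : 'I_n -> V * V)
  (sigma : {perm 'I_n}) :
  complex_iso ends (relabel ends sigma).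
Proof. exact: iso. Qed.
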